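(* Let $X$ be a countable set, let $w$ be an essentially locally finite weight on $X$ generating a metric $\delta=\delta_w$, let $x\in X$ and let $R>0$. Let $\mathcal P\subseteq\{\gamma\in\Pi(X)\mid \gamma(0)=x,\ l_w(\gamma)<R\}$ be an infinite set of finite paths. Then there exists an infinite path $\gamma_\infty\in\Pi_\infty(X)$ with $l_w(\gamma_\infty)\le R$ such that for every $n\in\mathbb N$ there exist infinitely many paths $\gamma\in\mathcal P$ with $\gamma(k)=\gamma_\infty(k)$ for $k=0,\dots,n$.
   Context: $\Pi(X)$ is the set of injective maps $\gamma:\{0,\dots,n\}\to X$, $n\in\mathbb N_0$ (finite paths, identified with $(\gamma(0),\dots,\gamma(n))$), and $\Pi_\infty(X)$ is the set of injective maps $\gamma:\mathbb N_0\to X$ (infinite paths). A weight on $X$ is a symmetric function $w:X\times X\to[0,\infty]$ with $w(x,y)=0$ iff $x=y$; it is essentially locally finite if $\#\{y\in X\mid w(x,y)<R\}<\infty$ for all $x\in X$, $R>0$. The $w$-length of $\gamma=(x_0,\dots,x_n)$ is $l_w(\gamma)=\sum_{i=1}^n w(x_{i-1},x_i)$, and of an infinite path $(x_0,x_1,\dots)$ it is $\sum_{i=1}^\infty w(x_{i-1},x_i)$. $\delta_w(x,y):=\inf\{l_w(\gamma)\mid\gamma\text{ a path from }x\text{ to }y\}$. *)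

(* Defs.v *)
From HB Require Import structures.
From mathcomp Require Import all_boot all_order all_algebra.
From mathcomp Require Import all_classical all_reals all_analysis.
Set Implicit Arguments. Unset Strict Implicit. Unset Printing Implicit Defensive.
Import Order.TTheory GRing.Theory Num.Theory.
Local Open Scope classical_set_scope.
Local Open Scope ring_scope.
Local Open Scope ereal_scope.

Definition is_weight (R : realType) (X : Type) (w : X -> X -> \bar R) : Prop :=
  (forall x y, w x y = w y x) /\ (forall x y, 0 <= w x y) /\
  (forall x y, w x y = 0 <-> x = y).

Definition ess_loc_finite (R : realType) (X : Type) (w : X -> X -> \bar R) : Prop :=
  forall (x : X) (r : R), (0 < r)%R -> finite_set [set y | w x y < r%:E].

Definition is_fpath (X : eqType) (g : seq X) : Prop := (0 < size g)%N /\ uniq g.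

Definition is_ipath (X : Type) (g : nat -> X) : Prop := injective g.

Fixpoint lw (R : realType) (X : Type) (w : X -> X -> \bar R) (g : seq X) : \bar R :=
  match g with
  | a :: ((b :: _) as t) => w a b + lw w t
  | _ => 0
  end.

Definition lw_inf (R : realType) (X : Type) (w : X -> X -> \bar R) (g : nat -> X)
  : \bar R := \sum_(i <oo) w (g i) (g i.+1).

Definition delta (R : realType) (X : eqType) (w : X -> X -> \bar R) (x y : X)
  : \bar R :=
  ereal_inf [set lw w g | g in [set g : seq X | is_fpath g /\ head x g = x /\
                                               last x g = y]].

Definition generates_metric (R : realType) (X : eqType) (w : X -> X -> \bar R)
  : Prop :=
  (forall x y, delta w x y \is a fin_num) /\
  (forall x y, delta w x y = 0 -> x = y) /\
  (forall x y, delta w x y = delta w y x) /\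
  (forall x y z, delta w x z <= delta w x y + delta w y z).

(* Main.v *)
Require Import Defs.
From HB Require Import structures.
From mathcomp Require Import all_boot all_order all_algebra.
From mathcomp Require Import all_classical all_reals all_analysis.
Import Order.TTheory GRing.Theory Num.Theory.
Local Open Scope classical_set_scope.
Local Open Scope ring_scope.
Local Open Scope ereal_scope.


Lemma lwcc (R : realType) (X : Type) (w : X -> X -> \bar R) a b t :
  lw w (a :: b :: t) = w a b + lw w (b :: t).
Proof. by []. Qed.

Lemma lw_ge0 (R : realType) (X : Type) (w : X -> X -> \bar R) :
  (forall a b, 0 <= w a b) -> forall g, 0 <= lw w g.
Proof.
move=> w0; elim=> [|a [|b t] IH] //.
by rewrite lwcc; apply: adde_ge0.
Qed.

Lemma lw_cat (R : realType) (X : Type) (w : X -> X -> \bar R) a s u :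
  lw w (a :: s ++ u) = lw w (a :: s) + lw w (last a s :: u).
Proof.
elim: s a => [|b s IH] a; first by rewrite cat0s [lw w [:: a]]/= add0e.
by rewrite cat_cons !lwcc IH addeA.
Qed.

Lemma lw_rcons (R : realType) (X : Type) (w : X -> X -> \bar R) a s y :
  lw w (rcons (a :: s) y) = lw w (a :: s) + w (last a s) y.
Proof.
by rewrite -cats1 lw_cat lwcc [lw w [:: y]]/= adde0.
Qed.

Theorem lemma2p3 (R : realType) (X : countType) (w : X -> X -> \bar R)
  (hw : is_weight w) (hloc : ess_loc_finite w) (hmet : generates_metric w)
  (x : X) (r : R) (hr : (0 < r)%R) (P : set (seq X))
  (hP : P `<=` [set g | is_fpath g /\ head x g = x /\ lw w g < r%:E])
  (hPinf : ~ finite_set P) :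
  exists ginf : nat -> X, is_ipath ginf /\ lw_inf w ginf <= r%:E /\
    forall n : nat,
      ~ finite_set [set g | P g /\ (n < size g)%N /\
                            forall k : nat, (k <= n)%N -> nth x g k = ginf k].
Proof.
have w0 : forall a b, 0 <= w a b by case: hw => _ [].
pose Pref (s : seq X) := [set g | P g /\ exists t, g = s ++ t].
have step : forall a s, ~ finite_set (Pref (a :: s)) ->
    exists y, ~ finite_set (Pref (rcons (a :: s) y)).
  move=> a s Hinf; apply/not_existsP => /= Hall; apply: Hinf.
  apply: (@sub_finite_set _ _ ([set a :: s] `|`
     \bigcup_(y in [set y | w (last a s) y < r%:E]) Pref (rcons (a :: s) y))).
  - move=> g [Pg [t Hg]]; subst g; case: t => [|y t] in Pg *.
      by left; rewrite cats0.
    right; exists y.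
      have [_ [_ Hl]] := hP _ Pg.
      move: Hl; rewrite cat_cons lw_cat lwcc => Hl.
      apply: le_lt_trans Hl.
      apply: lee_paddl; first exact: lw_ge0.
      by apply: leeDl; exact: lw_ge0.
    by split => //; exists t; rewrite -cats1 -catA.
  - rewrite finite_setU; split; first exact: finite_set1.
    apply: bigcup_finite; first exact: hloc.
    by move=> y _; have /contrapT := Hall y.
pose nxt (s : seq X) := rcons s (xget x [set y | ~ finite_set (Pref (rcons s y))]).
pose seqs n := iter n nxt [:: x].
have Hinv : forall n, ~ finite_set (Pref (seqs n)) /\ size (seqs n) = n.+1 /\
    exists s', seqs n = x :: s'.
  elim=> [|n [IHf [IHs [s' IHe]]]].
    split; last by split => //; exists [::].
    apply: contra_not hPinf; apply: sub_finite_set => g Pg; split => //.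
    have [[sz _] [hd _]] := hP _ Pg.
    by case: g sz hd Pg => // a t _ /= ->; exists t.
  rewrite /seqs iterS -/(seqs n) /nxt; split; last first.
    by rewrite size_rcons IHs; split => //; rewrite IHe; exists (rcons s' (xget x [set y | ~ finite_set (Pref (rcons (x :: s') y))])).
  apply: (@xgetPex _ x [set y | ~ finite_set (Pref (rcons (seqs n) y))]).
  by rewrite IHe; apply: step; rewrite -IHe.
have Hpre : forall n m, (n <= m)%N -> exists t, seqs m = seqs n ++ t.
  move=> n m /subnK <-; elim: (m - n)%N => [|k [t IH]]; first by exists [::]; rewrite cats0.
  by rewrite addSn /seqs iterS -/(seqs _) IH /nxt -cats1 -catA; eexists.
pose ginf k := nth x (seqs k) k.
have Hnth : forall n k, (k <= n)%N -> nth x (seqs n) k = ginf k.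
  move=> n k kn; have [t ->] := Hpre _ _ kn.
  by rewrite nth_cat (proj1 (proj2 (Hinv k))) ltnS leqnn.
have Hex : forall n, exists g, Pref (seqs n) g.
  move=> n; apply: contrapT => Hne; apply: (proj1 (Hinv n)).
  have -> : Pref (seqs n) = set0 by apply/seteqP; split => // g Hg; apply: Hne; exists g.
  exact: finite_set0.
have Huniq : forall n, uniq (seqs n).
  move=> n; have [g [Pg [t Ht]]] := Hex n.
  have [[_ ug] _] := hP _ Pg; move: ug; rewrite Ht cat_uniq.
  by case/and3P.
have Hlen : forall n, lw w (seqs n) < r%:E.
  move=> n; have [g [Pg [t Ht]]] := Hex n.
  have [_ [_ Hl]] := hP _ Pg.
  have [_ [_ [s' Hs]]] := Hinv n.
  apply: le_lt_trans Hl; rewrite Ht Hs lw_cat.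
  by apply: leeDl; exact: lw_ge0.
have Hsum : forall n, (\sum_(0 <= i < n) w (ginf i) (ginf i.+1))%R = lw w (seqs n).
  elim=> [|n IH]; first by rewrite big_geq.
  rewrite big_nat_recr //= IH.
  have [_ [Hsz [s' Hs]]] := Hinv n.
  have Hn1 : seqs n.+1 = rcons (seqs n) (ginf n.+1).
    have E : seqs n.+1 = nxt (seqs n) by []. rewrite /ginf E /nxt nth_rcons Hsz.
    by rewrite ltnn eqxx.
  rewrite -[nxt (seqs n)]/(seqs n.+1) Hn1 Hs lw_rcons; congr (_ + w _ _).
  have Hsn : n = (size (x :: s')).-1 by rewrite -Hs Hsz.
  rewrite -(Hnth n n (leqnn n)) Hs.
  have -> : nth x (x :: s') n = last x (x :: s') by rewrite Hsn nth_last.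
  by [].
exists ginf; split; last split.
- move=> i j Hij.
  have Hi : (i <= maxn i j)%N by apply: leq_maxl.
  have Hj : (j <= maxn i j)%N by apply: leq_maxr.
  move: Hij; rewrite -(Hnth _ _ Hi) -(Hnth _ _ Hj) => /eqP.
  have [_ [Hsz _]] := Hinv (maxn i j).
  by rewrite nth_uniq ?Hsz ?ltnS // => /eqP.
- rewrite /lw_inf; apply: lime_le.
    by apply: is_cvg_nneseries => n _ _; exact: w0.
  by apply: nearW => n /=; rewrite Hsum; apply: ltW.
- move=> n; apply: contra_not (proj1 (Hinv n)); apply: sub_finite_set.
  move=> g [Pg [t Hg]]; subst g; split => //; split.
    by rewrite size_cat (proj1 (proj2 (Hinv n))) leq_addr.
  move=> k kn; rewrite nth_cat (proj1 (proj2 (Hinv n))) ltnS kn.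
  exact: Hnth.
Qed.
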